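(* There is an absolute constant $C$ such that the following holds. Let $\mathcal L(G(V,E),M,N,\{\pi^{v,e}\})$ be a $k$-Label Cover instance such that $|(\pi^{v,e})^{-1}(i)|\le d=4^k$ for all projections and all $i\in[N]$, and which is smooth with parameter $J=4^{17k}$. Let $\tau=k^{-13}$ and let $\vec w_v\in\mathbb R^M$ ($v\in V$) be arbitrary (the weight vectors of a halfspace $h(\vec y)=\mathrm{sgn}(\sum_{v\in V}\langle\vec w_v,\vec y_v\rangle-\theta)$ on $\{0,1\}^{V\times M}$). Then the fraction (with multiplicity) of hyperedges of $E$ that are $2\tau$-nice is at least $1-C/k$.
   Context: A $k$-Label Cover instance is a $k$-uniform hypergraph on $V$ with a multiset $E$ of hyperedges $e=(v_1,\dots,v_k)$ of distinct vertices, each with projections $\pi^{v_i,e}:[M]\to[N]$. It is smooth with parameter $J$ if for every vertex $v$ and all $i\ne j\in[M]$, for a uniformly random hyperedge $e$ containing $v$, $\Pr[\pi^{v,e}(i)=\pi^{v,e}(j)]\le1/J$. Critical index: for $\vec u\in\mathbb R^n$ order indices $i_1,\dots,i_n$ by decreasing $|u^{(i)}|$ (ties by increasing index), $\sigma_m^2=\sum_{j\ge m}|u^{(i_j)}|^2$; $c_\tau(\vec u)$ is the smallest $m$ with $|u^{(i_m)}|\le\tau\sigma_m$ ($+\infty$ if none); $C_\tau(\vec u)=\{i_1,\dots,i_{c_\tau(\vec u)-1}\}$ if finite, else $[n]$. $\mathrm{truncate}(\vec u,S)$ agrees with $\vec u$ on $S$ and is $0$ elsewhere. Set $\vec s_v=\mathrm{truncate}(\vec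 w_v,C_\tau(\vec w_v))$ and $\vec l_v=\vec w_v-\vec s_v$. A vertex $v$ is $\beta$-nice with respect to a hyperedge $e\ni v$ if $\sum_{i\in[N]}\big(\sum_{j\in\pi^{-1}(i)}|l_v^{(j)}|\big)^4\le\beta\|\vec l_v\|_2^4$ where $\pi=\pi^{v,e}$; a hyperedge is $\beta$-nice if each of its vertices is $\beta$-nice with respect to it. *)

(* Defs.v *)
From HB Require Import structures.
From mathcomp Require Import all_boot all_order all_algebra.
Set Implicit Arguments. Unset Strict Implicit. Unset Printing Implicit Defensive.
Import Order.TTheory GRing.Theory Num.Theory.
Local Open Scope ring_scope.

Section CriticalIndex.
Variables (R : rcfType) (n : nat).
Implicit Types (u : 'I_n -> R) (tau : R).

Definition crit_order u : seq 'I_n :=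
  sort (fun a b => (`|u b| < `|u a|) || ((`|u a| == `|u b|) && (a <= b)%N))
       (enum 'I_n).

(* sigma_{t+1} (0-based t): sqrt of sum_{j >= t+1} |u^(i_j)|^2 *)
Definition crit_sigma u (t : nat) : R :=
  Num.sqrt (\sum_(j <- drop t (crit_order u)) `|u j| ^+ 2).

(* (c_tau(u) - 1): number of indices before the critical index
   (equals n when c_tau = +infinity) *)
Definition crit_pos tau u : nat :=
  find (fun t => if ohead (drop t (crit_order u)) is Some x
                 then `|u x| <= tau * crit_sigma u t else false)
       (iota 0 n).

Definition crit_set tau u : {set 'I_n} :=
  [set x in take (crit_pos tau u) (crit_order u)].

Definition truncate u (S : {set 'I_n}) : 'I_n -> R :=
  fun j => if j \in S then u j else 0.

Definition small_part tau u := truncate u (crit_set tau u).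
Definition large_part tau u : 'I_n -> R := fun j => u j - small_part tau u j.

Definition norm2 u : R := Num.sqrt (\sum_j u j ^+ 2).
End CriticalIndex.

Definition nice_wrt (R : rcfType) (M N : nat) (tau beta : R)
    (w : 'I_M -> R) (pi : 'I_M -> 'I_N) : bool :=
  let l := large_part tau w in
  \sum_(i : 'I_N) (\sum_(j : 'I_M | pi j == i) `|l j|) ^+ 4
    <= beta * norm2 l ^+ 4.

(* Label cover: hyperedges indexed by 'I_m (multiset E), edge e is a k-tuple
   of vertices; proj e v is pi^{v,e} (only meaningful for v in edge e). *)
Definition smooth (V : finType) (k m M N J : nat)
    (edge : 'I_m -> k.-tuple V) (proj : 'I_m -> V -> 'I_M -> 'I_N) : Prop :=
  forall (v : V) (i j : 'I_M), i != j ->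
    (#|[set e : 'I_m | (v \in edge e) && (proj e v i == proj e v j)]|%:R
       / #|[set e : 'I_m | v \in edge e]|%:R <= (J%:R)^-1 :> rat).

Definition nice_edge (R : rcfType) (V : finType) (k m M N : nat) (tau beta : R)
    (edge : 'I_m -> k.-tuple V) (proj : 'I_m -> V -> 'I_M -> 'I_N)
    (w : V -> 'I_M -> R) (e : 'I_m) : bool :=
  [forall p : 'I_k, nice_wrt tau beta (w (tnth (edge e) p)) (proj e (tnth (edge e) p))].

(* Main.v *)
Require Import Defs.
From HB Require Import structures.
From mathcomp Require Import all_boot all_order all_algebra.
From Stdlib Require Import Lia.


Set Implicit Arguments. Unset Strict Implicit. Unset Printing Implicit Defensive.
Import Order.TTheory GRing.Theory Num.Theory.
Local Open Scope ring_scope.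

Lemma large_partE (R : rcfType) n (tau : R) (u : 'I_n -> R) j :
  large_part tau u j = if j \in take (crit_pos tau u) (crit_order u) then 0 else u j.
Proof.
rewrite /large_part /small_part /truncate /crit_set inE.
by case: ifP => _; rewrite ?subrr ?subr0.
Qed.

Lemma crit_bound (R : rcfType) n (tau : R) (u : 'I_n -> R) : 0 <= tau ->
  forall j, `|large_part tau u j| <= tau * norm2 (large_part tau u).
Proof.
move=> tau0.
have n2 : 0 <= norm2 (large_part tau u) by rewrite /norm2 sqrtr_ge0.
have hp : perm_eq (crit_order u) (enum 'I_n) by rewrite /crit_order perm_sort.
have su : uniq (crit_order u) by rewrite (perm_uniq hp) enum_uniq.
have sm : forall j, j \in crit_order u by move=> j; rewrite (perm_mem hp) mem_enum.
have ss : size (crit_order u) = n by rewrite (perm_size hp) size_enum_ord.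
set s := crit_order u in hp su sm ss *.
pose p := crit_pos tau u.
have hl : forall j, large_part tau u j = if j \in take p s then 0 else u j.
  by move=> j; rewrite large_partE.
pose P t := if ohead (drop t s) is Some x then `|u x| <= tau * crit_sigma u t else false.
have pE : p = find P (iota 0 n) by [].
have [hh|hh] := boolP (has P (iota 0 n)); last first.
  have pn : p = n by rewrite pE hasNfind // size_iota.
  move=> j; rewrite hl pn take_oversize ?ss // sm normr0.
  by rewrite mulr_ge0.
have pn : (p < n)%N by move: hh; rewrite has_find size_iota -pE.
have Pp : P p.
  have := nth_find 0%N hh; rewrite -pE nth_iota //.
have hsum : forall F : 'I_n -> R, \sum_j F j = \sum_(j <- s) F j.
  by move=> F; rewrite (perm_big _ hp) big_enum.
move: Pp; rewrite /P; case ed: (drop p s) => [|x rest] //= hx.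
have hdis : forall j, j \in drop p s -> j \notin take p s.
  move=> j hj; apply/negP => ht.
  move: su; rewrite -(cat_take_drop p s) cat_uniq => /and3P[_ /hasPn hn _].
  by have := hn j hj; rewrite ht.
have hn2 : norm2 (large_part tau u) = crit_sigma u p.
  rewrite /norm2 /crit_sigma -/s hsum -{1}(cat_take_drop p s) big_cat /=.
  rewrite big_seq_cond big1 ?add0r; last first.
    by move=> j /andP[hj _]; rewrite hl hj expr0n.
  congr Num.sqrt; rewrite big_seq_cond [in RHS]big_seq_cond; apply: eq_bigr => j /andP[hj _].
  by rewrite hl (negbTE (hdis j hj)) real_normK ?num_real.
have srt : sorted (fun a b => `|u b| <= `|u a|) s.
  apply: (sub_sorted _ (sort_sorted _ _)).
    by move=> a b /orP[/ltW|/andP[/eqP -> _]] //.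
  move=> a b /=; case: (ltgtP `|u a| `|u b|) => h //=.
  exact: leq_total.
have hall : all (fun b => `|u b| <= `|u x|) rest.
  have := drop_sorted p srt; rewrite ed /= => hpath.
  apply: (order_path_min _ hpath) => b a c h1 h2; exact: le_trans h2 h1.
rewrite hn2 => j; rewrite hl; case: ifP => hj.
  by rewrite normr0 mulr_ge0 // /crit_sigma sqrtr_ge0.
have : j \in drop p s by move: (sm j); rewrite -{1}(cat_take_drop p s) mem_cat hj.
rewrite ed in_cons => /orP[/eqP -> //|hr].
exact: le_trans (allP hall j hr) hx.
Qed.
Lemma amgm2 (R : realDomainType) (x y : R) : x * y *+ 2 <= x ^+ 2 + y ^+ 2.
Proof.
have := sqr_ge0 (x - y); rewrite sqrrB addrAC subr_ge0 //.
Qed.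

Lemma cs_sum (R : realDomainType) (I : finType) (P : pred I) (x : I -> R) :
  (\sum_(j | P j) x j) ^+ 2 <= #|P|%:R * \sum_(j | P j) x j ^+ 2.
Proof.
rewrite -(ler_pMn2r (n:=2)) //.
rewrite expr2 mulr_suml -sumrMnl.
under eq_bigr => i _ do rewrite mulr_sumr -sumrMnl.
apply: le_trans (ler_sum _ (fun i _ => ler_sum _ (fun j _ => amgm2 (x i) (x j)))) _.
rewrite (eq_bigr (fun i => #|P|%:R * x i ^+ 2 + \sum_(j | P j) x j ^+ 2)); last first.
  move=> i _; rewrite big_split /= sumr_const.
  by rewrite mulr_natl.
rewrite big_split /= sumr_const -mulr_sumr mulr_natl mulr2n.
by [].
Qed.

Lemma sq_add_le (R : realDomainType) (x y : R) : (x + y) ^+ 2 <= (x ^+ 2 + y ^+ 2) *+ 2.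
Proof.
rewrite sqrrD [in X in _ <= X]mulr2n addrAC lerD2l.
exact: amgm2.
Qed.

Lemma pow4_add_le (R : realDomainType) (x y : R) : (x + y) ^+ 4 <= 8 * (x ^+ 4 + y ^+ 4).
Proof.
have h1 : (x + y) ^+ 4 <= ((x ^+ 2 + y ^+ 2) *+ 2) ^+ 2.
  rewrite (_ : 4 = 2 * 2)%N // exprM ler_pXn2r //; last first.
  - by rewrite nnegrE mulrn_wge0 // addr_ge0 // sqr_ge0.
  - by rewrite nnegrE sqr_ge0.
  exact: sq_add_le.
apply: le_trans h1 _.
have := sq_add_le (x ^+ 2) (y ^+ 2).
rewrite -!exprM /= => h.
rewrite exprMn_n.
apply: le_trans (ler_wMn2r _ h) _.
by rewrite -mulrnA mulr_natl.
Qed.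

Lemma subsum (R : numDomainType) (I : finType) (P Q : pred I) (F : I -> R) :
  (forall j, 0 <= F j) -> \sum_(j | P j && Q j) F j <= \sum_(j | P j) F j.
Proof.
move=> F0; rewrite [X in _ <= X](bigID Q) /= lerDl.
by apply: sumr_ge0 => j _.
Qed.

Lemma sum_part (R : numDomainType) (I J : finType) (p : I -> J) (F : I -> R) :
  \sum_(i : J) \sum_(j | p j == i) F j = \sum_j F j.
Proof. by rewrite (partition_big p xpredT). Qed.

Lemma local (R : rcfType) M N (a : 'I_M -> R) (pi : 'I_M -> 'I_N) (T D dl L : R) :
  (forall j, 0 <= a j) -> L = \sum_j a j ^+ 2 -> 0 <= T -> 0 <= dl -> 0 <= D ->
  (forall j, a j ^+ 2 <= T * L) ->
  (forall i, #|[set j | pi j == i]|%:R <= D) ->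
  (0 < L -> forall j j', j != j' -> dl * L <= a j ^+ 2 -> dl * L <= a j' ^+ 2 -> pi j != pi j') ->
  \sum_i (\sum_(j | pi j == i) a j) ^+ 4 <= 8 * (T + D ^+ 3 * dl) * L ^+ 2.
Proof.
move=> a0 HL T0 dl0 D0 aT Hd Hnc.
have L0 : 0 <= L by rewrite HL sumr_ge0 // => j _; rewrite sqr_ge0.
have RHS0 : 0 <= 8 * (T + D ^+ 3 * dl) * L ^+ 2.
  by rewrite !mulr_ge0 ?addr_ge0 ?mulr_ge0 ?exprn_ge0 ?sqr_ge0.
have [Lp|Lle] := ltP 0 L; last first.
  have LE : L = 0 by apply/le_anti; rewrite Lle L0.
  have az j : a j = 0.
    apply/eqP; rewrite -sqrf_eq0 eq_le sqr_ge0 andbT.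
    by have := aT j; rewrite LE mulr0.
  rewrite big1 // => i _; rewrite big1 ?expr0n // => j _; exact: az.
set big := fun j => dl * L <= a j ^+ 2.
pose Bs i := \sum_(j | (pi j == i) && big j) a j.
pose Ss i := \sum_(j | (pi j == i) && ~~ big j) a j.
have step1 : \sum_i (\sum_(j | pi j == i) a j) ^+ 4 <=
             8 * (\sum_i Bs i ^+ 4 + \sum_i Ss i ^+ 4).
  rewrite -big_split mulr_sumr /=; apply: ler_sum => i _.
  by rewrite (bigID big) /=; apply: pow4_add_le.
have stepB : \sum_i Bs i ^+ 4 <= T * L ^+ 2.
  apply: (@le_trans _ _ (\sum_i \sum_(j | pi j == i) a j ^+ 4)).
    apply: ler_sum => i _; rewrite /Bs.
    case: (pickP [pred j | (pi j == i) && big j]) => [b /andP[hb1 hb2] | h0].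
      rewrite (eq_bigl (fun j => j == b)); last first.
        move=> j; case: (eqVneq j b) => [->|neq]; first by rewrite hb1 hb2.
        apply/negbTE/negP => /andP[h1 h2].
        by have := Hnc Lp j b neq h2 hb2; rewrite (eqP h1) (eqP hb1) eqxx.
      rewrite big_pred1_eq (bigD1 b) //= lerDl.
      by apply: sumr_ge0 => j _; rewrite exprn_ge0.
    rewrite big_pred0; last by move=> j; exact: h0.
    by rewrite expr0n /=; apply: sumr_ge0 => j _; rewrite exprn_ge0.
  rewrite sum_part HL expr2 mulrA mulr_sumr; apply: ler_sum => j _.
  rewrite -HL (_ : 4 = 2 + 2)%N // exprD; apply: ler_wpM2r; first exact: sqr_ge0.
  exact: aT.
have stepS : \sum_i Ss i ^+ 4 <= D ^+ 3 * dl * L ^+ 2.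
  pose X i := \sum_(j | (pi j == i) && ~~ big j) a j ^+ 2.
  apply: (@le_trans _ _ (\sum_i (D * X i) * (D ^+ 2 * (dl * L)))).
    apply: ler_sum => i _.
    pose P := fun j => (pi j == i) && ~~ big j.
    have hc : #|P|%:R <= D.
      apply: le_trans (Hd i); rewrite ler_nat; apply: subset_leq_card.
      by apply/subsetP => j; rewrite !inE /P => /andP[].
    have c0 : 0 <= #|P|%:R :> R by [].
    have hcs : Ss i ^+ 2 <= #|P|%:R * X i := cs_sum P a.
    have X0 : 0 <= X i by apply: sumr_ge0 => j _; rewrite sqr_ge0.
    have hX : X i <= #|P|%:R * (dl * L).
      rewrite mulr_natl -sumr_const; apply: ler_sum => j /andP[_ hb].
      by apply: ltW; rewrite ltNge.
    rewrite (_ : 4 = 2 + 2)%N // exprD; apply: ler_pM; rewrite ?sqr_ge0 //.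
      by apply: le_trans hcs _; apply: ler_wpM2r.
    apply: le_trans hcs _; rewrite expr2 -mulrA; apply: ler_pM => //.
    apply: le_trans hX _; apply: ler_wpM2r => //; rewrite mulr_ge0 //.
  rewrite -mulr_suml -mulr_sumr.
  have hXL : \sum_i X i <= L.
    rewrite HL -(sum_part pi); apply: ler_sum => i _.
    by apply: subsum => j; rewrite sqr_ge0.
  apply: (@le_trans _ _ (D * L * (D ^+ 2 * (dl * L)))).
    apply: ler_wpM2r; first by rewrite !mulr_ge0 ?exprn_ge0.
    by apply: ler_wpM2l.
  by rewrite !exprS expr0 !mulr1 !mulrA (mulrAC D L D) (mulrAC (D*D) L D) (mulrAC (D*D*D) L dl).
apply: le_trans step1 _.
rewrite -mulrA ler_pM2l // mulrDl.
exact: lerD.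
Qed.

Lemma card_big (R : rcfType) M (dl L : R) (a : 'I_M -> R) : 0 < dl -> L = \sum_j a j ^+ 2 ->
  #|[set j | (0 < L) && (dl * L <= a j ^+ 2)]|%:R <= dl^-1.
Proof.
move=> dl0 HL; set B := [set j | _].
have [Lp|Lle] := ltP 0 L; last first.
  have -> : B = set0.
    by apply/setP => j; rewrite !inE ltNge Lle.
  by rewrite cards0 invr_ge0 ltW.
have h : #|B|%:R * (dl * L) <= L.
  apply: (@le_trans _ _ (\sum_(j in B) a j ^+ 2)).
    by rewrite mulr_natl -sumr_const; apply: ler_sum => j; rewrite inE => /andP[_].
  rewrite HL [X in _ <= X](bigID (mem B)) /= lerDl; apply: sumr_ge0 => j _; exact: sqr_ge0.
rewrite -(ler_pM2r dl0) mulVf ?gt_eqF //.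
by rewrite -(ler_pM2r Lp) mul1r -mulrA.
Qed.

Lemma nice_of (R : rcfType) M N (tau D dl : R) (w : 'I_M -> R) (pi : 'I_M -> 'I_N) :
  0 < tau -> 8 * tau <= 1 -> 0 < D -> dl = tau / (8 * D ^+ 3) ->
  (forall i, #|[set j | pi j == i]|%:R <= D) ->
  (0 < \sum_j `|large_part tau w j| ^+ 2 -> forall j j', j != j' ->
     dl * \sum_j `|large_part tau w j| ^+ 2 <= `|large_part tau w j| ^+ 2 ->
     dl * \sum_j `|large_part tau w j| ^+ 2 <= `|large_part tau w j'| ^+ 2 ->
     pi j != pi j') ->
  nice_wrt tau (2 * tau) w pi.
Proof.
move=> tau0 tau8 D0 hdl Hd Hnc.
rewrite /nice_wrt.
set l := large_part tau w in Hnc *.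
set L := \sum_j `|l j| ^+ 2 in Hnc *.
have L0 : 0 <= L by apply: sumr_ge0 => j _; exact: sqr_ge0.
have n2 : norm2 l ^+ 2 = L.
  rewrite /norm2 sqr_sqrtr; last by apply: sumr_ge0 => j _; exact: sqr_ge0.
  by apply: eq_bigr => j _; rewrite real_normK ?num_real.
have dl0 : 0 <= dl by rewrite hdl; apply: divr_ge0; [exact: ltW | rewrite mulr_ge0 // exprn_ge0 // ltW].
have haT : forall j, `|l j| ^+ 2 <= tau ^+ 2 * L.
  move=> j; rewrite -n2 -exprMn expr2 [X in _ <= X]expr2.
  have := crit_bound w (ltW tau0) j; rewrite -/l => h.
  by apply: ler_pM.
apply: le_trans (local (a := fun j => `|l j|) (T := tau ^+ 2) _ _ _ dl0 (ltW D0) haT Hd Hnc) _.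
- by move=> j.
- by [].
- exact: sqr_ge0.
have n4 : norm2 l ^+ 4 = L ^+ 2 by rewrite -n2 -exprM.
rewrite n4; apply: ler_wpM2r; first exact: sqr_ge0.
have e : D ^+ 3 * dl = tau / 8.
  by rewrite hdl invfM mulrCA [D ^+ 3 * _]mulrCA divff ?mulr1 // expf_neq0 // gt_eqF.
rewrite e mulrDr [8 * (tau / 8)]mulrCA divff ?pnatr_eq0 // mulr1 expr2 mulrA.
rewrite [X in _ <= X]mulr_natl mulr2n lerD2r.
by rewrite -[X in _ <= X]mul1r ler_pM2r.
Qed.

Section NatS.
Local Open Scope nat_scope.
Lemma k4 k : (k ^ 4 <= 8 ^ k)%N.
Proof.
elim: k => // k IH.
case: k IH => [|[|[|k]]] IH //.
rewrite expnS.
apply: leq_trans (_ : 8 * (k.+3) ^ 4 <= _); last by rewrite leq_mul2l IH orbT.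
rewrite -(leq_pmul2l (_ : 0 < 81)) //.
have -> : 81 * k.+4 ^ 4 = (3 * k.+4) ^ 4 by rewrite expnMn.
apply: (@leq_trans ((4 * k.+3) ^ 4)).
  rewrite leq_exp2r //; apply/ssrnat.leP; rewrite -!multE; lia.
by rewrite expnMn mulnA leq_mul2r (_ : 4 ^ 4 = 256) // (_ : 81 * 8 = 648) // orbT.
Qed.

Lemma k28 k : (k ^ 28 <= 4 ^ (11 * k))%N.
Proof.
have -> : 28 = 4 * 7 by [].
rewrite expnM.
apply: (@leq_trans ((8 ^ k) ^ 7)); first by rewrite leq_exp2r ?k4.
have -> : (8 ^ k) ^ 7 = 2 ^ (3 * k * 7).
  by rewrite expnM expnM.
have -> : 4 ^ (11 * k) = 2 ^ (2 * (11 * k)) by rewrite [in RHS]expnM.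
rewrite leq_exp2l //; apply/ssrnat.leP; rewrite -!multE; lia.
Qed.

Lemma sum_in_card (T : finType) (A : pred T) : \sum_e ((e \in A) : nat) = #|A|.
Proof. by rewrite -sum1_card [RHS]big_mkcond; apply: eq_bigr => e _; case: (e \in A). Qed.
End NatS.

Theorem lemma5p5 :
  exists C : nat,
  forall (R : rcfType) (V : finType) (k m M N : nat)
    (edge : 'I_m -> k.-tuple V) (proj : 'I_m -> V -> 'I_M -> 'I_N)
    (w : V -> 'I_M -> R),
    (0 < k)%N ->
    (0 < m)%N ->
    (forall e : 'I_m, uniq (edge e)) ->
    (forall (e : 'I_m) (v : V) (i : 'I_N), v \in edge e ->
        (#|[set j : 'I_M | proj e v j == i]| <= 4 ^ k)%N) ->
    smooth (4 ^ (17 * k)) edge proj ->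
    let tau : R := (k%:R) ^- 13 in
    1 - C%:R / k%:R <=
      #|[set e : 'I_m | nice_edge tau (2 * tau) edge proj w e]|%:R / m%:R :> R.
Proof.
exists 64%N.
move=> R V k m M N edge proj w k0 m0 _ hd hsm; cbv zeta; set tau : R := k%:R ^- 13.
have kR : 0 < k%:R :> R by rewrite ltr0n.
have mR : 0 < m%:R :> R by rewrite ltr0n.
have fr0 : 0 <= #|[set e : 'I_m | nice_edge tau (2 * tau) edge proj w e]|%:R / m%:R :> R.
  by rewrite divr_ge0 // ltW.
have [k1|k2] := leqP k 1.
  apply: le_trans fr0; rewrite subr_le0 ler_pdivlMr // mul1r ler_nat.
  by apply: leq_trans k1 _.
set d := (4 ^ k)%N.
set J := (4 ^ (17 * k))%N.
pose D : R := d%:R.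
pose dl : R := tau / (8 * D ^+ 3).
pose l v := large_part tau (w v).
pose L v := \sum_j `|l v j| ^+ 2.
pose B v := [set j | (0 < L v) && (dl * L v <= `|l v j| ^+ 2)].
pose P v := [set x in setX (B v) (B v) | x.1 != x.2].
pose Col v (x : 'I_M * 'I_M) := [set e | (v \in edge e) && (proj e v x.1 == proj e v x.2)].
pose deg v := #|[set e | v \in edge e]|.
pose Nice := [set e | nice_edge tau (2 * tau) edge proj w e].
pose K0 := (8 * d ^ 3 * k ^ 13)%N.
have k13 : (8 <= k ^ 13)%N.
  apply: (@leq_trans (2 ^ 13)) => //; by rewrite leq_exp2r.
have tauE : tau = ((k ^ 13)%N%:R)^-1 by rewrite /tau natrX.
have tau0 : 0 < tau by rewrite tauE invr_gt0 ltr0n expn_gt0 k0.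
have tau8 : 8 * tau <= 1.
  by rewrite tauE -[8 * _]/(8 / _) ler_pdivrMr ?ltr0n ?expn_gt0 ?k0 // mul1r ler_nat.
have D0 : 0 < D by rewrite ltr0n expn_gt0.
have dl0 : 0 < dl by rewrite divr_gt0 // mulr_gt0 // exprn_gt0.
have hinv : dl^-1 = K0%:R.
  by rewrite /dl invf_div tauE invrK /K0 natrM [(8 * d ^ 3)%N%:R]natrM (natrX _ d 3).
have hB : forall v, (#|B v| <= K0)%N.
  move=> v; rewrite -(ler_nat R) -hinv.
  exact: (@card_big R M dl (L v) (fun j => `|l v j|) dl0 erefl).
have hP : forall v, (#|P v| <= K0 * K0)%N.
  move=> v; apply: (@leq_trans #|setX (B v) (B v)|).
    by apply: subset_leq_card; apply/subsetP => x; rewrite inE => /andP[].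
  by rewrite cardsX leq_mul.
have hCol : forall v x, x \in P v -> (J * #|Col v x| <= deg v)%N.
  move=> v [j j'] /=; rewrite inE => /andP[_ /= neq].
  have := hsm v j j' neq.
  rewrite -/(deg v) -/(Col v (j, j')).
  have hsub : (#|Col v (j, j')| <= deg v)%N.
    by apply: subset_leq_card; apply/subsetP => e; rewrite !inE => /andP[].
  case: (posnP (deg v)) => [d0|dp].
    by move: hsub; rewrite d0 leqn0 => /eqP ->; rewrite muln0.
  rewrite ler_pdivrMr ?ltr0n // => h.
  rewrite -(ler_nat rat) natrM mulrC -ler_pdivlMr ?ltr0n ?expn_gt0 //.
  by rewrite mulrC.
have hniceV : forall e v, v \in edge e -> (forall x, x \in P v -> e \notin Col v x) ->
    nice_wrt tau (2 * tau) (w v) (proj e v).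
  move=> e v hv hno.
  apply: (@nice_of R M N tau D dl) => //.
    by move=> i; rewrite ler_nat; apply: hd.
  move=> Lp j j' neq hj hj'.
  have hx : (j, j') \in P v.
    by rewrite inE in_setX /= neq !inE /= -/(l v) -/(L v) Lp hj hj'.
  have := hno _ hx; rewrite inE hv /=.
  by [].
pose cnt e := (\sum_v \sum_(x in P v) ((e \in Col v x) : nat))%N.
have hpos : forall e, e \notin Nice -> (0 < cnt e)%N.
  move=> e he; rewrite lt0n; apply/negP => /eqP h0; move/negP: he; apply.
  rewrite inE; apply/forallP => p.
  apply: hniceV (mem_tnth p (edge e)) _ => x hx; apply/negP => hc.
  by move: h0; rewrite /cnt (bigD1 (tnth (edge e) p)) //= (bigD1 x) //= hc.
have hcount : (#|~: Nice| <= \sum_v \sum_(x in P v) #|Col v x|)%N.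
  rewrite -sum1_card; apply: (@leq_trans (\sum_(e in ~: Nice) cnt e)).
    by apply: leq_sum => e; rewrite inE => he; exact: hpos.
  apply: (@leq_trans (\sum_e cnt e)).
    by rewrite [X in (_ <= X)%N](bigID (mem (~: Nice))) /= leq_addr.
  rewrite /cnt exchange_big /=; apply: leq_sum => v _.
  rewrite exchange_big /=; apply: leq_sum => x _.
  by rewrite sum_in_card.
have hdeg : (\sum_v deg v <= m * k)%N.
  rewrite /deg; under eq_bigr => v _ do rewrite -sum_in_card.
  rewrite exchange_big /=.
  apply: (@leq_trans (\sum_(e : 'I_m) k)); last by rewrite sum_nat_const card_ord.
  apply: leq_sum => e _.
  rewrite (eq_bigr (fun v => ((v \in edge e) : nat))); last by move=> v _; rewrite inE.
  by rewrite sum_in_card; apply: leq_trans (card_size _) _; rewrite size_tuple.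
have hJ : (J * #|~: Nice| <= K0 * K0 * (m * k))%N.
  apply: leq_trans (leq_mul (leqnn J) hcount) _.
  rewrite big_distrr /=; apply: (@leq_trans (\sum_v K0 * K0 * deg v)).
    apply: leq_sum => v _; rewrite big_distrr /=.
    apply: (@leq_trans (\sum_(x in P v) deg v)); first by apply: leq_sum => x hx; apply: hCol.
    by rewrite sum_nat_const leq_mul2r hP orbT.
  by rewrite -big_distrr leq_mul2l hdeg orbT.
have hK : (K0 * K0 * (k * k) <= 64 * J)%N.
  have -> : (K0 * K0 * (k * k) = 64 * (d ^ 3 * d ^ 3) * (k ^ 13 * k ^ 13 * k * k))%N.
    rewrite /K0 -!multE; lia.
  rewrite -expnD /d -expnM -expnD -!expnSr -mulnA leq_mul2l /=.
  apply: leq_trans (leq_mul (leqnn _) (k28 k)) _.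
  by rewrite -expnD /J leq_exp2l //; apply/ssrnat.leP; rewrite -!multE -!plusE; lia.
have hfin : (k * #|~: Nice| <= 64 * m)%N.
  rewrite -(leq_pmul2l (_ : 0 < J)%N) ?expn_gt0 //.
  apply: (@leq_trans (k * (K0 * K0 * (m * k)))).
    by rewrite mulnCA leq_mul2l hJ orbT.
  apply: (@leq_trans (K0 * K0 * (k * k) * m)).
    by apply/ssrnat.leP; rewrite -!multE; lia.
  apply: leq_trans (leq_mul hK (leqnn m)) _.
  by rewrite mulnCA mulnA.
have eN : #|Nice| = (m - #|~: Nice|)%N by rewrite cardsCs card_ord.
have hle : (#|~: Nice| <= m)%N by rewrite -[X in (_ <= X)%N](card_ord m) max_card.
rewrite -/Nice eN natrB // mulrBl divff ?gt_eqF // lerD2l lerN2.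
rewrite ler_pdivrMr // mulrAC ler_pdivlMr // -!natrM ler_nat mulnC.
exact: hfin.
Qed.
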